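(* Let $\mathbf d=(d_1\ge\cdots\ge d_n)$ be a weakly decreasing sequence of nonnegative integers and $\mathbf x^{\mathbf d}=x_1^{d_1}\cdots x_n^{d_n}$. If $w\in\mathfrak S_n$ satisfies $\mathrm{Des}(w)\subseteq\mathrm{Des}(\mathbf d)$, then the leading term of $\overline\pi_w(\mathbf x^{\mathbf d})$ with respect to neglex is the monomial $w(\mathbf x^{\mathbf d})=x_{w(1)}^{d_1}\cdots x_{w(n)}^{d_n}$.
   Context: $H_n(0)$ acts on $\mathbb F[x_1,\dots,x_n]$ ($\mathbb F$ any field) via isobaric Demazure operators $\pi_i(f)=\frac{x_if-x_{i+1}s_i(f)}{x_i-x_{i+1}}$, where $s_i$ swaps $x_i$ and $x_{i+1}$. $\overline\pi_i=\pi_i-1$, i.e. $\overline\pi_i(f)=\frac{x_{i+1}(f-s_i(f))}{x_i-x_{i+1}}$, and $\overline\pi_w=\overline\pi_{i_1}\cdots\overline\pi_{i_\ell}$ for any reduced expression $w=s_{i_1}\cdots s_{i_\ell}$. A permutation acts on polynomials by $x_i\mapsto x_{w(i)}$. For an integer sequence $\mathbf i$, $\mathrm{Des}(\mathbf i)=\{j: i_j>i_{j+1}\}$; for $w\in\mathfrak S_n$, $\mathrm{Des}(w)=\{j:w(j)>w(j+1)\}$. Neglex is the lexicographic term order with $x_n>\cdots>x_1$. *)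

(* Defs.v *)
(* Polynomials in n variables over a field F are represented
   as coefficient functions on exponent vectors (finitely supported ones are
   singled out by [is_poly]).  Variables x_1..x_n are indexed 0..n-1. *)
From HB Require Import structures.
From mathcomp Require Import all_boot all_order all_algebra all_fingroup.
From Stdlib Require Import ClassicalEpsilon.
Set Implicit Arguments. Unset Strict Implicit. Unset Printing Implicit Defensive.
Import GRing.Theory.
Local Open Scope ring_scope.

(* exponent vectors: b k = exponent of x_(k+1) *)
Definition mon (n : nat) := {ffun 'I_n -> nat}.

Definition mpoly (F : fieldType) (n : nat) := mon n -> F.

(* finitely supported = genuine polynomial *)
Definition is_poly (F : fieldType) n (f : mpoly F n) : Prop :=
  exists N : nat, forall b : mon n, f b != 0 -> forall k, (b k <= N)%N.

Definition monomial (F : fieldType) n (m : mon n) : mpoly F n :=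
  fun b => if b == m then 1 else 0.

(* adjacent transposition s_i (0-based: swaps positions i and i+1),
   identity if i+1 >= n (never used in that case) *)
Definition sadj (n i : nat) : 'S_n :=
  match (insub i : option 'I_n), (insub i.+1 : option 'I_n) with
  | Some a, Some b => tperm a b
  | _, _ => 1%g
  end.

Definition mulX (F : fieldType) n (j : nat) (g : mpoly F n) : mpoly F n :=
  fun b => if [exists k : 'I_n, (val k == j) && (0 < b k)%N]
           then g [ffun k => if val k == j then (b k).-1 else b k]
           else 0.

Definition swapS (F : fieldType) n (i : nat) (f : mpoly F n) : mpoly F n :=
  fun b => f [ffun k => b (sadj n i k)].

(* bar pi_i f = x_{i+1} (f - s_i f) / (x_i - x_{i+1}) (1-based), i.e. the
   unique polynomial g with (x_i - x_{i+1}) g = x_{i+1} (f - s_i f). *)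
Definition pibar_spec (F : fieldType) n (i : nat) (f g : mpoly F n) : Prop :=
  is_poly g /\
  forall b, mulX i g b - mulX i.+1 g b
            = mulX i.+1 (fun c => f c - swapS i f c) b.

Definition pibar (F : fieldType) n (i : nat) (f : mpoly F n) : mpoly F n :=
  epsilon (inhabits (fun _ => 0)) (pibar_spec i f).

Definition pibar_word (F : fieldType) n (s : seq nat) (f : mpoly F n) : mpoly F n :=
  foldr (fun i h => pibar i h) f s.

(* s is a reduced expression w = s_{i1} ... s_{il} (composition of maps) *)
Definition inversions n (w : 'S_n) : nat :=
  #|[set p : 'I_n * 'I_n | (p.1 < p.2)%N && (w p.2 < w p.1)%N]|.

Definition reduced_word n (w : 'S_n) (s : seq nat) : Prop :=
  all (fun i => i.+1 < n)%N s /\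
  (forall k : 'I_n, w k = foldr (fun i y => sadj n i y) k s) /\
  size s = inversions w.

Definition des_sub n (w : 'S_n) (d : mon n) : Prop :=
  forall j j' : 'I_n, val j' = (val j).+1 ->
    (w j' < w j)%N -> (d j' < d j)%N.

Definition weakly_decr n (d : mon n) : Prop :=
  forall i j : 'I_n, (i <= j)%N -> (d j <= d i)%N.

(* w(x^d) = prod_k x_{w(k)}^{d_k}: exponent vector b with b (w k) = d k *)
Definition act_mon n (w : 'S_n) (d : mon n) : mon n :=
  [ffun k => d ((w^-1)%g k)].

(* neglex: lex order with x_n > ... > x_1; a >_neglex b *)
Definition neglex_gt n (a b : mon n) : Prop :=
  exists k : 'I_n, (b k < a k)%N /\ forall j : 'I_n, (k < j)%N -> a j = b j.

Definition leading_term (F : fieldType) n (h : mpoly F n) (m : mon n) (c : F) : Prop :=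
  c != 0 /\ h m = c /\ forall b, h b != 0 -> b <> m -> neglex_gt m b.

(* Main.v *)
Require Import Defs.
From mathcomp Require Import all_boot all_order all_algebra all_fingroup.
From mathcomp Require Import zify ring.
From Stdlib Require Import ClassicalEpsilon.
Set Implicit Arguments. Unset Strict Implicit. Unset Printing Implicit Defensive.
Import GRing.Theory.

Section Pair.
Variables (n i : nat).
Hypothesis Hi : i.+1 < n.

Definition I0 : 'I_n := Ordinal (ltnW Hi).
Definition I1 : 'I_n := Ordinal Hi.

Lemma I01 : (I0 == I1) = false.
Proof. by rewrite -val_eqE /= eqn_leq ltnn andbF. Qed.
Lemma I10 : (I1 == I0) = false.
Proof. by rewrite eq_sym I01. Qed.

Definition setp (b : mon n) (x y : nat) : mon n :=
  [ffun k => if k == I0 then x else if k == I1 then y else b k].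

Lemma setp0 b x y : setp b x y I0 = x.
Proof. by rewrite ffunE eqxx. Qed.
Lemma setp1 b x y : setp b x y I1 = y.
Proof. by rewrite ffunE I10 eqxx. Qed.
Lemma setpD b x y k : k != I0 -> k != I1 -> setp b x y k = b k.
Proof. by rewrite ffunE => /negPf-> /negPf->. Qed.
Lemma setpK b x y x' y' : setp (setp b x y) x' y' = setp b x' y'.
Proof.
apply/ffunP=> k; rewrite !ffunE.
by case: (k =P I0) => // _; case: (k =P I1).
Qed.
Lemma setp_id b : setp b (b I0) (b I1) = b.
Proof.
apply/ffunP=> k; rewrite !ffunE.
by case: (k =P I0) => [->|_] //; case: (k =P I1) => [->|].
Qed.

Lemma sadjE : sadj n i = tperm I0 I1.
Proof.
rewrite /sadj (insubT (fun k => k < n) (ltnW Hi)) (insubT (fun k => k < n) Hi).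
congr tperm; exact: val_inj.
Qed.

Lemma ord_eqI0 (k : 'I_n) : (val k == i) = (k == I0).
Proof. by rewrite -val_eqE. Qed.
Lemma ord_eqI1 (k : 'I_n) : (val k == i.+1) = (k == I1).
Proof. by rewrite -val_eqE. Qed.

Variable F : fieldType.

Lemma mulX0 (g : mpoly F n) b :
  mulX i g b = if 0 < b I0 then g (setp b (b I0).-1 (b I1)) else 0%R.
Proof.
rewrite /mulX.
have -> : [exists k : 'I_n, (val k == i) && (0 < b k)] = (0 < b I0).
  apply/existsP/idP => [[k /andP[]]|H]; last by exists I0; rewrite eqxx H.
  by rewrite ord_eqI0 => /eqP->.
case: ifP => // _; congr g; apply/ffunP=> k; rewrite !ffunE ord_eqI0.
by case: (k =P I0) => [->|_] //; case: (k =P I1) => [->|].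
Qed.

Lemma mulX1 (g : mpoly F n) b :
  mulX i.+1 g b = if 0 < b I1 then g (setp b (b I0) (b I1).-1) else 0%R.
Proof.
rewrite /mulX.
have -> : [exists k : 'I_n, (val k == i.+1) && (0 < b k)] = (0 < b I1).
  apply/existsP/idP => [[k /andP[]]|H]; last by exists I1; rewrite eqxx H.
  by rewrite ord_eqI1 => /eqP->.
case: ifP => // _; congr g; apply/ffunP=> k; rewrite !ffunE ord_eqI1.
case: (k =P I0) => [->|_]; first by rewrite I01.
by case: (k =P I1) => [->|].
Qed.

Lemma swapSE (f : mpoly F n) b : swapS i f b = f (setp b (b I1) (b I0)).
Proof.
rewrite /swapS sadjE; congr f; apply/ffunP=> k; rewrite !ffunE.
case: (k =P I0) => [->|/eqP k0]; first by rewrite tpermL.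
case: (k =P I1) => [->|/eqP k1]; first by rewrite tpermR.
by rewrite tpermD // eq_sym.
Qed.


Definition rr (f : mpoly F n) (b : mon n) : F :=
  mulX i.+1 (fun c => f c - swapS i f c)%R b.

Lemma rrE f c x y :
  rr f (setp c x y) = if 0 < y then (f (setp c x y.-1) - f (setp c y.-1 x))%R else 0%R.
Proof. by rewrite /rr mulX1 setp1 setp0 setpK swapSE setp1 setp0 setpK. Qed.

Definition speq (g f : mpoly F n) := forall b, (mulX i g b - mulX i.+1 g b = rr f b)%R.

Lemma speqE g f : speq g f -> forall c x y,
  ((if (0 < x)%N then g (setp c x.-1 y) else 0) - (if (0 < y)%N then g (setp c x y.-1) else 0)
   = rr f (setp c x y))%R.
Proof. by move=> E c x y; rewrite -E mulX0 mulX1 !setp0 !setp1 !setpK. Qed.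

Lemma downE g f : speq g f -> forall c x y,
  g (setp c x y) = (- \sum_(t < x.+1) rr f (setp c (x - t) (y + t).+1))%R.
Proof.
move=> /speqE E c x; elim: x => [|x IH] y.
  have := E c 0 y.+1; rewrite /= big_ord1 subn0 addn0 => <-.
  by rewrite opprB subr0.
have := E c x.+1 y.+1; rewrite /= IH => H.
rewrite big_ord_recl /= subn0 addn0.
have -> : (\sum_(i0 < x.+1) rr f (setp c (x.+1 - bump 0 i0) (y + bump 0 i0).+1)
        = \sum_(t < x.+1) rr f (setp c (x - t) (y.+1 + t).+1))%R.
  by apply: eq_bigr => t _; rewrite /bump /= add1n subSS addnS addSn.
rewrite -H; ring.
Qed.

Lemma upE g f : speq g f -> forall c x y,
  g (setp c x y) = (\sum_(t < y) rr f (setp c (x + t).+1 (y - t)))%R.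
Proof.
move=> /speqE E c x y; elim: y x => [|y IH] x.
  have := E c x.+1 0; rewrite /= rrE /= subr0 => ->.
  by rewrite big_ord0.
have := E c x.+1 y.+1; rewrite /= IH => H.
rewrite big_ord_recl /= addn0 subn0 -H.
have -> : (\sum_(i0 < y) rr f (setp c (x + bump 0 i0).+1 (y.+1 - bump 0 i0))
        = \sum_(t < y) rr f (setp c (x.+1 + t).+1 (y - t)))%R.
  by apply: eq_bigr => t _; rewrite /bump /= add1n subSS addnS addSn.
by rewrite subrK.
Qed.

Definition g0 (f : mpoly F n) : mpoly F n := fun c =>
  (- \sum_(t < (c I0).+1) rr f (setp c (c I0 - t) (c I1 + t).+1))%R.

Lemma g0E f c x y :
  g0 f (setp c x y) = (- \sum_(t < x.+1) rr f (setp c (x - t) (y + t).+1))%R.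
Proof.
rewrite /g0 setp0 setp1; congr (- _)%R; apply: eq_bigr => t _; by rewrite setpK.
Qed.

Lemma g0_speq f : speq (g0 f) f.
Proof.
move=> b; rewrite -[b](setp_id) mulX0 mulX1 !setp0 !setp1 !setpK !g0E.
case: (b I0) => [|x]; case: (b I1) => [|y] /=.
- by rewrite rrE subr0.
- by rewrite big_ord1 subn0 addn0 sub0r opprK.
- rewrite subr0 rrE /=.
  under eq_bigr => t _ do rewrite rrE /= add0n.
  rewrite sumrB.
  have -> : (\sum_(t < x.+1) f (setp b t (x - t)) = \sum_(t < x.+1) f (setp b (x - t) t))%R.
    rewrite (reindex_inj rev_ord_inj) /=; apply: eq_bigr => t _.
    by rewrite subSS subKn // -ltnS.
  by rewrite subrr oppr0.
- rewrite [(\sum_(t < x.+2) _)%R]big_ord_recl /= subn0 addn0.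
  have -> : (\sum_(i0 < x.+1) rr f (setp b (x.+1 - bump 0 i0) (y + bump 0 i0).+1)
        = \sum_(t < x.+1) rr f (setp b (x - t) (y.+1 + t).+1))%R.
    by apply: eq_bigr => t _; rewrite /bump /= add1n subSS addnS addSn.
  ring.
Qed.

Lemma sum_neq0 (m : nat) (G : 'I_m -> F) : (\sum_(t < m) G t)%R != 0%R -> exists t, G t != 0%R.
Proof.
move=> H; case: (pickP (fun t => G t != 0%R)) => [t Ht|H0]; first by exists t.
by move: H; rewrite big1 ?eqxx // => t _; move: (H0 t) => /negbFE/eqP.
Qed.

Lemma rr_neq0 f c x y : rr f (setp c x y.+1) != 0%R ->
  f (setp c x y) != 0%R \/ f (setp c y x) != 0%R.
Proof.
rewrite rrE /=; case: (f (setp c x y) =P 0%R) => [->|]; last by left; apply/eqP.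
by rewrite sub0r oppr_eq0; right.
Qed.

Lemma setp_le (c : mon n) x y N k : x <= N -> y <= N -> (forall k, k != I0 -> k != I1 -> c k <= N) ->
  setp c x y k <= N.
Proof.
move=> hx hy hc; rewrite ffunE; case: ifP => // /negbT k0; case: ifP => // /negbT k1.
exact: hc.
Qed.

Lemma g0_poly f : is_poly f -> is_poly (g0 f).
Proof.
case=> N HN; exists (N + N) => c Hc k.
have := Hc; rewrite /g0 oppr_eq0 => /sum_neq0 [t].
move=> /rr_neq0 H.
have [hx [hy hc]] : c I0 - t <= N /\ c I1 + t <= N /\ (forall k, k != I0 -> k != I1 -> c k <= N).
  case: H => /HN H.
    move: (H I0) (H I1); rewrite setp0 setp1 => h1 h2; do 2 split => //.
    by move=> k' k0 k1; move: (H k'); rewrite setpD.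
  move: (H I0) (H I1); rewrite setp0 setp1 => h1 h2; do 2 split => //.
  by move=> k' k0 k1; move: (H k'); rewrite setpD.
have ht : t <= N by lia.
rewrite -[c]setp_id setp_le //; first lia; first lia.
by move=> k' k0 k1; move: (hc k' k0 k1); lia.
Qed.

Lemma pibar_spec_ok (f : mpoly F n) : is_poly f -> pibar_spec i f (pibar i f).
Proof.
move=> Hf; rewrite /pibar; apply: epsilon_spec.
exists (g0 f); split; [exact: g0_poly | exact: g0_speq].
Qed.

Lemma pibar_poly (f : mpoly F n) : is_poly f -> is_poly (pibar i f).
Proof. by move=> /pibar_spec_ok []. Qed.

Lemma pibar_speq (f : mpoly F n) : is_poly f -> speq (pibar i f) f.
Proof. by move=> /pibar_spec_ok []. Qed.

End Pair.

Definition Gs n (th b : mon n) : nat := \sum_(k < n) (b k - th k).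
Definition decr n (th : mon n) := forall k l : 'I_n, k <= l -> th l <= th k.
Definition Inv n (m b : mon n) := forall th, decr th -> Gs th b <= Gs th m.

Lemma rearr1 (al be a c : nat) : be < al -> c <= a -> (al - a) + (be - c) <= (be - a) + (al - c).
Proof. move=> *; lia. Qed.

Lemma clampA (p al a c : nat) : c <= a -> (p - c) + (al - maxn c (minn a al)) <= (p - maxn c (minn a al)) + (al - c).
Proof. move=> *; lia. Qed.

Lemma clampB (q be a c : nat) : c <= a -> (q - a) + (be - maxn c (minn a be)) <= (q - maxn c (minn a be)) + (be - a).
Proof. move=> *; lia. Qed.

Lemma scal_main (Rb Rm p q al be a c : nat) : be < al -> c <= a ->
  Rb + (p - a) + (q - c) <= Rm + (al - a) + (be - c) ->
  Rb + (p - maxn c (minn a al)) + (q - maxn c (minn a be)) <=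
    Rm + (al - maxn c (minn a al)) + (be - maxn c (minn a be)) ->
  Rb + (q - a) + (p - c) <= Rm + (be - a) + (al - c) /\
  Rb + (p - a) + (q - c) <= Rm + (be - a) + (al - c).
Proof.
move=> h1 h2 H1 H2.
have r1 := @rearr1 al be a c h1 h2; have cA := @clampA p al a c h2; have cB := @clampB q be a c h2.
move: H1 H2 r1 cA cB.
move: (p - a) (q - c) (al - a) (be - c) (be - a) (al - c) => X1 X2 X3 X4 X5 X6.
move: (p - maxn c (minn a al)) (q - maxn c (minn a be)) (al - maxn c (minn a al)) (be - maxn c (minn a be)) => Y1 Y2 Y3 Y4.
move: (q - a) (p - c) => Z1 Z2.
move=> *; split; lia.
Qed.

Lemma scal_convex (N y lo hi a c : nat) : lo <= y -> y <= hi -> hi <= N -> c <= a ->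
  (N - y - a) + (y - c) <= maxn ((N - lo - a) + (lo - c)) ((N - hi - a) + (hi - c)).
Proof.
move=> h1 h2 h3 h4.
case: (leqP y c) => yc.
  apply: leq_trans (leq_maxl _ _); move=> {h2 h3}; lia.
case: (leqP (N - a) y) => ya.
  apply: leq_trans (leq_maxr _ _); move=> {h1}; lia.
apply: leq_trans (leq_maxl _ _); move=> {h2 h3}; lia.
Qed.

Section Pair2.
Variables (n i : nat).
Hypothesis Hi : i.+1 < n.
Local Notation I0 := (I0 Hi).
Local Notation I1 := (I1 Hi).
Local Notation setp := (setp Hi).

Definition Rs (th b : mon n) := \sum_(k < n | (k != I0) && (k != I1)) (b k - th k).

Lemma Gsplit th b : Gs th b = Rs th b + (b I0 - th I0) + (b I1 - th I1).
Proof.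
rewrite /Gs (bigD1 I0) // (bigD1 I1) /=; last by rewrite I10.
rewrite /Rs addnA addnC addnA; congr (_ + _ + _).

Qed.

Lemma Rs_setp th c x y : Rs th (setp c x y) = Rs th c.
Proof. by apply: eq_bigr => k /andP[k0 k1]; rewrite setpD. Qed.

Lemma Rs_setp_th th b x y : Rs (setp th x y) b = Rs th b.
Proof. by apply: eq_bigr => k /andP[k0 k1]; rewrite setpD. Qed.

Lemma GsE th c x y : Gs th (setp c x y) = Rs th c + (x - th I0) + (y - th I1).
Proof. by rewrite Gsplit Rs_setp setp0 setp1. Qed.

Lemma valI0 : nat_of_ord I0 = i. Proof. by []. Qed.
Lemma valI1 : nat_of_ord I1 = i.+1. Proof. by []. Qed.

Lemma decr_setp th l mu : decr th -> th I1 <= mu -> mu <= l -> l <= th I0 ->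
  decr (setp th l mu).
Proof.
move=> D h1 h2 h3 k l' kl; rewrite !ffunE.
have E0 : forall k : 'I_n, (k == I0) = (nat_of_ord k == i) by move=> k0; rewrite -val_eqE.
have E1 : forall k : 'I_n, (k == I1) = (nat_of_ord k == i.+1) by move=> k0; rewrite -val_eqE.
have D0 : k <= i -> th I0 <= th k by move=> h; apply: D; rewrite valI0.
have D1 : i.+1 <= l' -> th l' <= th I1 by move=> h; apply: D; rewrite valI1.
have Dkl := D k l' kl.
rewrite !E0 !E1.
repeat (case: ifP => /eqP ?); lia.
Qed.

Variable F : fieldType.

Lemma rr_neq0' (h : mpoly F n) c x y : rr i h (setp c x y.+1) != 0%R ->
  exists u v, u + v = x + y /\ h (setp c u v) != 0%R /\ (v = y \/ u = y).
Proof.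
move=> /rr_neq0 [H|H]; first by exists x, y; do !split => //; left.
by exists y, x; rewrite addnC; do !split => //; right.
Qed.

Lemma clamp_facts (a c al be : nat) : c <= a -> be < al ->
  c <= maxn c (minn a be) /\ maxn c (minn a be) <= maxn c (minn a al) /\ maxn c (minn a al) <= a.
Proof. move=> *; lia. Qed.
Lemma A1 x y (t : 'I_x.+1) : y <= y + t /\ y + t <= x + y.
Proof. have := ltn_ord t; lia. Qed.
Lemma A2 x y t : t < y -> y - t = (y - t.+1).+1 /\ y - t.+1 <= y /\ (x + t).+1 + (y - t.+1) = x + y.
Proof. move=> *; lia. Qed.
Lemma A3 x y (t : 'I_x.+1) : x - t + (y + t) = x + y.
Proof. have := ltn_ord t; lia. Qed.
Lemma A4 R X P Q T : X <= maxn P Q -> R + P <= T -> R + Q <= T -> R + X <= T.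
Proof. move=> *; lia. Qed.

Lemma step_supp (h : mpoly F n) (m : mon n) : is_poly h -> m I1 < m I0 ->
  (forall b, h b != 0%R -> Inv m b) ->
  forall c, pibar i h c != 0%R -> Inv (setp m (m I1) (m I0)) c.
Proof.
move=> Hp Hlt Hinv c Hc th Hth.
have hac : th I1 <= th I0 by apply: Hth; rewrite valI0 valI1.
have [c1 [c2 c3]] := clamp_facts hac Hlt.
have Hth' := decr_setp Hth c1 c2 c3.
have K : forall u v, h (setp c u v) != 0%R ->
    Rs th c + ((v - th I0) + (u - th I1)) <= Gs th (setp m (m I1) (m I0)) /\
    Rs th c + ((u - th I0) + (v - th I1)) <= Gs th (setp m (m I1) (m I0)).
  move=> u v Hn.
  have H1 := Hinv _ Hn th Hth; rewrite GsE Gsplit in H1.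
  have H2 := Hinv _ Hn _ Hth'; rewrite GsE Gsplit !setp0 !setp1 !Rs_setp_th in H2.
  have [A B] := scal_main Hlt hac H1 H2.
  by rewrite GsE !addnA; split.
have Ec : c = setp c (c I0) (c I1) by rewrite setp_id.
have [hi [hiy [hiN Khi]]] : exists hi, c I1 <= hi /\ hi <= c I0 + c I1 /\
     Rs th c + ((c I0 + c I1 - hi - th I0) + (hi - th I1)) <= Gs th (setp m (m I1) (m I0)).
  move: Hc; rewrite {1}Ec (downE Hi (pibar_speq Hi Hp)) oppr_eq0 => /sum_neq0 [t].
  have [a1 a2] := A1 (c I1) t; have a3 := A3 (c I1) t.
  move=> /rr_neq0' [u [v [huv [Hn [Ev|Eu]]]]]; exists (c I1 + t); do 2 split => //;
    rewrite -a3 -huv; [rewrite -Ev addnK | rewrite -Eu addKn];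
    have [k1 k2] := K u v Hn; done.
have [lo [loy Klo]] : exists lo, lo <= c I1 /\
     Rs th c + ((c I0 + c I1 - lo - th I0) + (lo - th I1)) <= Gs th (setp m (m I1) (m I0)).
  move: Hc; rewrite {1}Ec (upE Hi (pibar_speq Hi Hp)) => /sum_neq0 [t].
  have [b1 [b2 b3]] := A2 (c I0) (ltn_ord t).
  rewrite b1 => /rr_neq0' [u [v [huv [Hn [Ev|Eu]]]]]; exists (c I1 - t.+1); split => //;
    rewrite -b3 -huv; [rewrite -Ev addnK | rewrite -Eu addKn];
    have [k1 k2] := K u v Hn; done.
rewrite {1}Ec GsE.
have := scal_convex loy hiy hiN hac; rewrite addnK => Hcv.
rewrite -addnA; exact: A4 Hcv Klo Khi.
Qed.

Lemma only_m (h : mpoly F n) (m : mon n) u v : m I1 <= m I0 ->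
  (forall b, h b != 0%R -> Inv m b) -> h (setp m u v) != 0%R -> u <= m I0 /\ v <= m I1.
Proof.
move=> hle Hinv Hn.
pose th0 : mon n := [ffun k : 'I_n => if nat_of_ord k <= i then m I0 else m I1].
have D : decr th0.
  move=> k l kl; rewrite !ffunE; case: ifP; case: ifP => //; lia.
have := Hinv _ Hn th0 D; rewrite GsE Gsplit !ffunE valI0 valI1 leqnn ltnn subnn.
lia.
Qed.

Lemma step_coef (h : mpoly F n) (m : mon n) : is_poly h -> m I1 < m I0 -> h m = 1%R ->
  (forall b, h b != 0%R -> Inv m b) -> pibar i h (setp m (m I1) (m I0)) = 1%R.
Proof.
move=> Hp Hlt Hm Hinv.
rewrite (downE Hi (pibar_speq Hi Hp)) big_ord_recl /= subn0 addn0 rrE /=.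
have Z1 : forall t, h (setp m (m I1 - t) (m I0 + t)) = 0%R.
  move=> t; case: (h (setp m (m I1 - t) (m I0 + t)) =P 0%R) => // /eqP Hn; exfalso.
  have [_] := only_m (ltnW Hlt) Hinv Hn; rewrite leqNgt.
  by rewrite (leq_trans Hlt (leq_addr _ _)).
have := Z1 0; rewrite subn0 addn0 => ->.
rewrite (setp_id Hi) Hm big1 ?addr0 ?sub0r ?opprK // => t _.
rewrite rrE /= Z1 sub0r.
case: (h (setp m (m I0 + bump 0 t) (m I1 - bump 0 t)) =P 0%R) => [->|/eqP Hn]; first by rewrite oppr0.
have [] := only_m (ltnW Hlt) Hinv Hn; rewrite /bump /= add1n addnS ltnNge leq_addr.
by [].
Qed.

End Pair2.

Lemma le_sum_ord n (v : 'I_n -> nat) k : v k <= \sum_(j < n) v j.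
Proof. by rewrite (bigD1 k) //= leq_addr. Qed.

Lemma inv_neglex n (m b : mon n) : Inv m b -> b <> m -> neglex_gt m b.
Proof.
move=> Hinv Hbm.
have [k0 Hk0] : exists k, b k != m k.
  case: (pickP (fun k => b k != m k)) => [k Hk|H]; first by exists k.
  by case: Hbm; apply/ffunP => k; move: (H k) => /negbFE/eqP.
case: (@arg_maxnP _ k0 (fun k => b k != m k) (fun k : 'I_n => nat_of_ord k) Hk0) => k Hk Hmax.
have Agree : forall j : 'I_n, k < j -> b j = m j.
  move=> j kj; apply/eqP; apply: contraTT kj => Hj; rewrite -leqNgt; exact: Hmax.
pose BIG := \sum_(j < n) (b j + m j).
pose th : mon n := [ffun j : 'I_n => if j < k then BIG else 0].
have D : decr th.
  move=> k1 l1 kl; rewrite !ffunE; case: ifP => // l1k; rewrite (leq_ltn_trans kl l1k).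
  by [].
have GE : forall v : mon n, (forall j, v j <= BIG) -> Gs th v = v k + \sum_(j < n | k < j) v j.
  move=> v Hv; rewrite /Gs (bigD1 k) //= ffunE ltnn subn0; congr (_ + _).
  rewrite (bigID (fun j : 'I_n => j < k)) /= big1 ?add0n.
    apply: eq_big => j; last by move=> /andP[_ /negbTE jk]; rewrite ffunE jk subn0.
    rewrite -leqNgt; apply/idP/idP => [/andP[jk kj]|kj].
      by rewrite ltn_neqAle kj andbT eq_sym.
    apply/andP; split; last exact: ltnW.
    by apply: contraTneq kj => ->; rewrite ltnn.
  move=> j /andP[_ jk]; rewrite ffunE jk; apply/eqP; rewrite subn_eq0; exact: Hv.
have hb : forall j, b j <= BIG by move=> j; apply: (leq_trans _ (le_sum_ord (fun j => b j + m j) j)); rewrite leq_addr.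
have hm : forall j, m j <= BIG by move=> j; apply: (leq_trans _ (le_sum_ord (fun j => b j + m j) j)); rewrite leq_addl.
have := Hinv th D; rewrite !GE //.
have -> : \sum_(j < n | k < j) b j = \sum_(j < n | k < j) m j by apply: eq_bigr => j /Agree.
move=> H; exists k; split; last by move=> j /Agree.
by rewrite ltn_neqAle Hk /= -(leq_add2r (\sum_(j < n | k < j) m j)).
Qed.

Section Comb.
Variables (n i : nat).
Hypothesis Hi : i.+1 < n.
Local Notation I0 := (I0 Hi).
Local Notation I1 := (I1 Hi).
Local Notation t := (tperm I0 I1).

Lemma tval (u : 'I_n) : nat_of_ord (t u) =
  if nat_of_ord u == i then i.+1 else if nat_of_ord u == i.+1 then i else nat_of_ord u.
Proof.
have iS : (i.+1 == i) = false by apply/negbTE; rewrite neq_ltn ltnSn orbT.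
case: tpermP => [->|->|/eqP u0 /eqP u1] /=; rewrite ?eqxx ?iS //.
have h0 : nat_of_ord u != i by apply: contra u0 => /eqP h; apply/eqP/val_inj.
have h1 : nat_of_ord u != i.+1 by apply: contra u1 => /eqP h; apply/eqP/val_inj.
by rewrite (negbTE h0) (negbTE h1).
Qed.

Lemma t_ord (u v : 'I_n) : (t v < t u) =
  if (u == I0) && (v == I1) then true else if (u == I1) && (v == I0) then false else (v < u).
Proof.
have E0 : forall k : 'I_n, (k == I0) = (nat_of_ord k == i) by move=> k0; rewrite -val_eqE.
have E1 : forall k : 'I_n, (k == I1) = (nat_of_ord k == i.+1) by move=> k0; rewrite -val_eqE.
rewrite !tval !E0 !E1.
move: (nat_of_ord u) (nat_of_ord v) => U V.
repeat (case: ifP => /eqP ?); rewrite /= ?andbT ?andbF /=; first [by [] | (apply/negbTE; apply/negP => ?; lia) | (apply/idP; lia) | (apply/idP/idP => ?; lia)].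
Qed.

Local Open Scope group_scope.
Definition Aset (p : 'S_n) := [set pr : 'I_n * 'I_n | (pr.1 < pr.2) && (p pr.2 < p pr.1)].

Lemma x0y0 (p : 'S_n) : (p^-1)%g I0 != (p^-1)%g I1.
Proof. by rewrite (inj_eq perm_inj) I01. Qed.

Lemma inv_step (p : 'S_n) : p^-1 I0 < p^-1 I1 -> inversions (p * t)%g = (inversions p).+1.
Proof.
move=> lt01.
have E0 : forall a, (p a == I0) = (a == p^-1 I0).
  by move=> a; apply/eqP/eqP => [<-|->]; [rewrite permK | rewrite permKV].
have E1 : forall a, (p a == I1) = (a == p^-1 I1).
  by move=> a; apply/eqP/eqP => [<-|->]; [rewrite permK | rewrite permKV].
have EA : forall q, inversions q = #|Aset q| by [].
rewrite !EA.
have -> : Aset (p * t)%g = (p^-1 I0, p^-1 I1) |: Aset p.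
  apply/setP => [[a b]]; rewrite !inE /= !permM t_ord xpair_eqE !E0 !E1.
  case: (a =P p^-1 I0) => [->|ax] /=.
    case: (b =P p^-1 I1) => [->|bx] /=; first by rewrite lt01.
    by rewrite (negbTE (x0y0 p)).
  case: (a =P p^-1 I1) => [->|ay] /=; last by [].
  case: (b =P p^-1 I0) => [->|bx] //=.
  by rewrite ltnNge (ltnW lt01).
rewrite cardsU1 /Aset inE /= !permKV.
have -> : (I1 < I0) = false by rewrite /= ltnNge leqnSn.
by rewrite andbF.
Qed.

Lemma tt : (t * t)%g = 1%g. Proof. exact: tperm2. Qed.

Lemma inv_step2 (p : 'S_n) : p^-1 I1 < p^-1 I0 -> inversions p = (inversions (p * t)%g).+1.
Proof.
move=> lt10.
have := @inv_step (p * t)%g; rewrite -mulgA tt mulg1; apply.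
by rewrite invgM tpermV !permM tpermL tpermR.
Qed.

Lemma act_step (w' : 'S_n) (d : mon n) :
  act_mon (w' * t)%g d = setp Hi (act_mon w' d) (act_mon w' d I1) (act_mon w' d I0).
Proof.
apply/ffunP => k; rewrite !ffunE invgM tpermV permM.
case: (k =P I0) => [->|/eqP k0]; first by rewrite tpermL.
case: (k =P I1) => [->|/eqP k1]; first by rewrite tpermR.
by rewrite tpermD // eq_sym.
Qed.

End Comb.

Lemma desc_exists n (w : 'S_n) (a b : 'I_n) : a < b -> w b < w a ->
  exists j j' : 'I_n, nat_of_ord j' = (nat_of_ord j).+1 /\ a <= j /\ j' <= b /\ w j' < w j.
Proof.
suff H : forall k (b : 'I_n), nat_of_ord b = k -> a < b -> w b < w a ->
  exists j j' : 'I_n, nat_of_ord j' = (nat_of_ord j).+1 /\ a <= j /\ j' <= b /\ w j' < w j.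
  by apply: H.
elim => [|k IH] b' Eb; first by rewrite Eb.
move=> ab wab.
have kn : k < n by apply: (leq_trans _ (ltn_ord b')); rewrite Eb.
pose c := Ordinal kn.
case: (ltnP (w b') (w c)) => [lt|ge].
  exists c, b'; rewrite Eb /=; do !split => //; by rewrite -ltnS -Eb.
case: (ltnP a c) => [ac|ca].
  have [j [j' [h1 [h2 [h3 h4]]]]] := IH c erefl ac (leq_ltn_trans ge wab).
  exists j, j'; do !split => //; apply: leq_trans h3 _; by rewrite Eb /= leqnSn.
have ea : a = c.
  apply: val_inj => /=; apply/eqP; rewrite eqn_leq ca andbT -ltnS -Eb; exact: ab.
by move: wab; rewrite ea ltnNge ge.
Qed.

Lemma word_tail n j (s : seq nat) (w : 'S_n) (Hj : j.+1 < n) :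
  (forall k, w k = foldr (fun i y => sadj n i y) k (j :: s)) ->
  (forall k, (w * sadj n j)%g k = foldr (fun i y => sadj n i y) k s) /\
  w = ((w * sadj n j) * tperm (I0 Hj) (I1 Hj))%g.
Proof.
move=> Hw; rewrite (sadjE Hj); split.
  by move=> k; rewrite permM Hw /= (sadjE Hj) tpermK.
by rewrite -mulgA tperm2 mulg1.
Qed.

Lemma inv_id n (w : 'S_n) : (forall k, w k = k) -> inversions w = 0.
Proof.
move=> Hw; apply/eqP; rewrite cards_eq0; apply/eqP/setP => pr; rewrite !inE !Hw.
apply/negP => /andP[h1 h2]; have := ltn_trans h1 h2; by rewrite ltnn.
Qed.

Lemma inv_le n (s : seq nat) : forall (w : 'S_n), all (fun j => j.+1 < n) s ->
  (forall k, w k = foldr (fun i y => sadj n i y) k s) -> inversions w <= size s.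
Proof.
elim: s => [|j s IH] w /=; first by move=> _ Hw; rewrite inv_id.
move=> /andP[Hj Hall] Hw.
have [Hw' Ew] := word_tail Hj Hw.
have IH' := IH _ Hall Hw'.
set w' := (w * sadj n j)%g in Hw' Ew IH'.
case: (ltngtP ((w'^-1)%g (I0 Hj)) ((w'^-1)%g (I1 Hj))) => [lt|gt|eq].
- by rewrite Ew inv_step.
- have := inv_step2 gt; rewrite -Ew => E; rewrite E in IH'.
  exact: leq_trans (ltnW IH') (leqnSn _).
- by have := x0y0 Hj w'; rewrite -val_eqE /= eq => /eqP.
Qed.

Lemma main_ind (F : fieldType) n (d : mon n) : weakly_decr d -> forall s (w : 'S_n),
  des_sub w d -> reduced_word w s ->
  is_poly (pibar_word s (monomial F d)) /\
  pibar_word s (monomial F d) (act_mon w d) = 1%R /\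
  forall b, pibar_word s (monomial F d) b != 0%R -> Inv (act_mon w d) b.
Proof.
move=> Hd; elim => [|j s IH] w Hdes [Hall [Hw Hsize]].
  have w1 : w = 1%g by apply/permP => k; rewrite Hw perm1.
  have -> : act_mon w d = d by apply/ffunP => k; rewrite ffunE w1 invg1 perm1.
  rewrite /=; split; [|split].
  - exists (\sum_k d k) => b; rewrite /monomial /=; case: (b =P d) => [-> _ k|]; last by rewrite eqxx.
    exact: le_sum_ord.
  - by rewrite /monomial /= eqxx.
  - move=> b; rewrite /monomial /=; case: (b =P d) => [-> _|]; last by rewrite eqxx.
    by move=> th _.
move: Hall => /= /andP[Hj Hall].
have [Hw' Ew] := word_tail Hj Hw.
set w' := (w * sadj n j)%g in Hw' Ew.
have Hle := inv_le Hall Hw'.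
have lt : (w'^-1)%g (I0 Hj) < (w'^-1)%g (I1 Hj).
  case: ltngtP => // [gt|eq].
    have := inv_step2 gt; rewrite -Ew -Hsize /= => E.
    by move: Hle; rewrite E ltnNge leqnSn.
  by have := x0y0 Hj w'; rewrite -val_eqE /= eq => /eqP.
have Hred' : reduced_word w' s.
  split; [done|split; [done|]].
  have := inv_step lt; rewrite -Ew -Hsize /=; by case.
have wk : forall k, w k = tperm (I0 Hj) (I1 Hj) (w' k) by move=> k; rewrite {1}Ew permM.
have Hdes' : des_sub w' d.
  move=> j1 j2 E12 H12; apply: Hdes (E12) _; rewrite !wk t_ord.
  have nA : ~~ ((w' j1 == I0 Hj) && (w' j2 == I1 Hj)).
    apply/negP => /andP[/eqP e1 /eqP e2]; by move: H12; rewrite e1 e2 /= ltnNge leqnSn.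
  have nB : ~~ ((w' j1 == I1 Hj) && (w' j2 == I0 Hj)).
    apply/negP => /andP[/eqP e1 /eqP e2].
    have ej1 : j1 = (w'^-1)%g (I1 Hj) by rewrite -e1 permK.
    have ej2 : j2 = (w'^-1)%g (I0 Hj) by rewrite -e2 permK.
    by move: lt; rewrite -ej1 -ej2 E12 ltnNge leqnSn.
  by rewrite (negbTE nA) (negbTE nB).
have Ha : act_mon w d = setp Hj (act_mon w' d) (act_mon w' d (I1 Hj)) (act_mon w' d (I0 Hj)).
  by rewrite {1}Ew act_step.
have Hlt : act_mon w' d (I1 Hj) < act_mon w' d (I0 Hj).
  rewrite !ffunE.
  have wb : w ((w'^-1)%g (I1 Hj)) < w ((w'^-1)%g (I0 Hj)).
    by rewrite !wk !permKV tpermL tpermR /= ltnSn.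
  have [j1 [j2 [E12 [h1 [h2 h3]]]]] := desc_exists lt wb.
  have := Hdes j1 j2 E12 h3 => dd.
  apply: leq_ltn_trans (Hd _ _ h2) _; apply: leq_trans dd _; exact: Hd.
have [IHp [IHm IHinv]] := IH w' Hdes' Hred'.
rewrite /= Ha; split; [exact: pibar_poly | split].
  exact: step_coef.
exact: step_supp.
Qed.

Unset Implicit Arguments.

Theorem mainTheorem12 (F : fieldType) (n : nat) (d : mon n) (w : 'S_n)
    (s : seq nat) :
  weakly_decr d -> des_sub w d -> reduced_word w s ->
  leading_term (pibar_word s (monomial F d)) (act_mon w d) 1%R.
Proof.
move=> Hd Hdes Hred.
have [_ [Hm Hinv]] := main_ind F Hd Hdes Hred.
split; first exact: oner_neq0.
split => // b Hb Hbm; exact: inv_neglex (Hinv b Hb) Hbm.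
Qed.
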